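(* Let $\Delta$ be a thick spherical building with a chosen point $n\in\Delta$, let $\sigma$ be a simplex of $\Delta$ and $C$ a chamber containing $\sigma$. Then $\sigma$ lies in the horizontal part $\Delta^h$ if and only if every vertex $v$ of $C$ for which there is a path in the Coxeter diagram of $\Delta$ from the type of $v$ to the type of some vertex of $\sigma$ is equatorial.
   Context: $\Delta$ carries the CAT(1) angular metric $d$ (apartments are unit spheres). A point $x$ is equatorial if $d(n,x)=\pi/2$; a simplex is equatorial if all its points are. $\Delta$ decomposes as a spherical join $\ast_i\Delta_i$ of irreducible spherical buildings; the horizontal part $\Delta^h$ is the join of those factors $\Delta_i$ consisting entirely of equatorial points, and the vertical part $\Delta^v$ is the join of the remaining factors. Paths in the Coxeter diagram include the trivial path. *)

(* Defs.v *)
From mathcomp Require Import all_boot all_order all_algebra.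
From mathcomp Require Import all_classical all_reals all_analysis.
Import GRing.Theory Num.Theory.
Local Open Scope ring_scope.

(* A spherical building is encoded as a W-metric building (Abramenko-Brown,
   Def. 5.1) over a Coxeter system (W,S), S = 'I_r, where W is realized by its
   (faithful) Tits geometric representation on V = R^r with the bilinear form
   B(e_s,e_t) = -cos(pi/m_st).  A bpoint of the CAT(1) realization is a pair
   (c, x) with c a chamber and x a B-unit vector in the closed fundamental
   chamber K = {x | B(e_s,x) >= 0}.  The angular metric between (c,x) and
   (d,y) is acos B(x, delta(c,d) y) (computed in an apartment containing c,d). *)

Section Coxeter.
Variables (R : realType) (r : nat) (m : 'I_r -> 'I_r -> nat).

Definition coxeter_matrix : Prop :=
  [/\ forall s, m s s = 1%N,
      forall s t, m s t = m t s &
      forall s t, s != t -> (2 <= m s t)%N].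

Definition cox_form : 'M[R]_r := \matrix_(s, t) - cos (pi / (m s t)%:R).

Definition bil (x y : 'cV[R]_r) : R := (x^T *m cox_form *m y) 0 0.

Definition ebase (s : 'I_r) : 'cV[R]_r := delta_mx s 0.

Definition refl (s : 'I_r) : 'M[R]_r :=
  1%:M - 2%:R *: (ebase s *m row s cox_form).

Definition wprod (w : seq 'I_r) : 'M[R]_r :=
  foldr (fun s M => refl s *m M) 1%:M w.

Definition in_W (M : 'M[R]_r) : Prop := exists w, wprod w = M.

Definition W_finite : Prop := exists L : seq 'M[R]_r, forall w, wprod w \in L.

Definition is_length (M : 'M[R]_r) (n : nat) : Prop :=
  (exists w, size w = n /\ wprod w = M) /\
  (forall w, wprod w = M -> (n <= size w)%N).

(* Coxeter diagram: edge s -- t iff m_st >= 3; paths include trivial path *)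
Definition cox_adj : rel 'I_r := fun s t => (3 <= m s t)%N.
Definition cox_path (s t : 'I_r) : bool := connect cox_adj s t.

Section Building.
Variables (Ch : Type) (delta : Ch -> Ch -> 'M[R]_r).

Definition is_W_building : Prop :=
  [/\ forall c d, in_W (delta c d),
      forall c d, delta c d = 1%:M <-> c = d,
      forall c c' d s, delta c' c = refl s ->
         (delta c' d = refl s *m delta c d \/ delta c' d = delta c d) /\
         (forall n, is_length (delta c d) n ->
                    is_length (refl s *m delta c d) n.+1 ->
                    delta c' d = refl s *m delta c d) &
      forall c d s, exists c', delta c' c = refl s /\
                               delta c' d = refl s *m delta c d].

(* every panel contains at least three chambers *)
Definition thick : Prop :=
  forall c s, exists c1 c2, c1 <> c2 /\ delta c c1 = refl s /\ delta c c2 = refl s.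

Definition in_chamber (x : 'cV[R]_r) : Prop :=
  (forall s, 0 <= bil (ebase s) x) /\ bil x x = 1.

Definition bpoint := (Ch * 'cV[R]_r)%type.

Definition ang_dist (p q : bpoint) : R := acos (bil p.2 (delta p.1 q.1 *m q.2)).

Definition equatorial (n p : bpoint) : Prop := ang_dist n p = pi / 2.

Definition supp_in (x : 'cV[R]_r) (P : 'I_r -> Prop) : Prop :=
  forall s, bil (ebase s) x != 0 -> P s.

(* the irreducible factor containing type t consists entirely of equatorial points *)
Definition horiz_factor (n : bpoint) (t : 'I_r) : Prop :=
  forall c x, in_chamber x -> supp_in x (fun s => cox_path t s) ->
    equatorial n (c, x).

(* membership in the horizontal part Delta^h (join of the horizontal factors) *)
Definition in_horizontal (n : bpoint) (p : bpoint) : Prop :=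
  supp_in p.2 (horiz_factor n).

(* the face sigma of type J of chamber c lies in Delta^h *)
Definition face_in_horizontal (n : bpoint) (c : Ch) (J : {set 'I_r}) : Prop :=
  forall x, in_chamber x -> supp_in x (fun s => s \in J) -> in_horizontal n (c, x).

(* x represents the vertex of type s of the fundamental chamber *)
Definition vertex_of_type (s : 'I_r) (x : 'cV[R]_r) : Prop :=
  in_chamber x /\ forall t, t != s -> bil (ebase t) x = 0.

End Building.
End Coxeter.

Arguments coxeter_matrix {r}.
Arguments W_finite R {r}.
Arguments cox_path {r}.
Arguments is_W_building {R r} m {Ch}.
Arguments thick {R r} m {Ch}.
Arguments in_chamber {R r} m.
Arguments face_in_horizontal {R r} m {Ch}.
Arguments vertex_of_type {R r} m.
Arguments equatorial {R r} m {Ch}.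

(* Main.v *)
Require Import Defs.
From mathcomp Require Import all_boot all_order all_algebra.
From mathcomp Require Import all_classical all_reals all_analysis.
Import Order.TTheory GRing.Theory Num.Theory.
Local Open Scope ring_scope.

Lemma B_sym (R : realType) r (m : 'I_r -> 'I_r -> nat) :
  coxeter_matrix m -> (cox_form R r m)^T = cox_form R r m.
Proof. by case=> _ hs _; apply/matrixP=> i j; rewrite !mxE hs. Qed.

Lemma B_diag (R : realType) r (m : 'I_r -> 'I_r -> nat) s :
  coxeter_matrix m -> cox_form R r m s s = 1.
Proof. by case=> hd _ _; rewrite mxE hd divr1 cospi opprK. Qed.

Lemma bil_ebase (R : realType) r (m : 'I_r -> 'I_r -> nat) s x :
  bil R r m (ebase R r s) x = (cox_form R r m *m x) s 0.
Proof. by rewrite /bil /ebase trmx_delta -mulmxA -rowE mxE. Qed.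

Lemma be1 (R : realType) r (m : 'I_r -> 'I_r -> nat) s :
  coxeter_matrix m -> row s (cox_form R r m) *m ebase R r s = 1%:M.
Proof.
move=> hc; rewrite /ebase -colE; apply/matrixP=> i j.
case: hc => hd _ _; by rewrite !ord1 !mxE hd divr1 cospi opprK.
Qed.

Lemma refl_e (R : realType) r (m : 'I_r -> 'I_r -> nat) s :
  coxeter_matrix m -> refl R r m s *m ebase R r s = - ebase R r s.
Proof.
move=> hc; rewrite /refl mulmxBl mul1mx -scalemxAl -mulmxA be1 // mulmx1.
by rewrite scaler_nat mulr2n opprD addrA subrr add0r.
Qed.

Lemma two_lemma (R : realType) r (X Y : 'M[R]_r) :
  X - 2%:R *: Y - (2%:R *: Y - 2%:R *: (2%:R *: Y)) = X.
Proof.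
rewrite !scaler_nat !mulr2n.
by rewrite opprB addrK subrK.
Qed.

Lemma EE (R : realType) r (m : 'I_r -> 'I_r -> nat) s :
  coxeter_matrix m ->
  (ebase R r s *m row s (cox_form R r m)) *m (ebase R r s *m row s (cox_form R r m))
   = ebase R r s *m row s (cox_form R r m).
Proof. by move=> hc; rewrite mulmxA -(mulmxA (ebase _ _ _)) be1 // mulmx1. Qed.

Lemma refl_invol (R : realType) r (m : 'I_r -> 'I_r -> nat) s :
  coxeter_matrix m -> refl R r m s *m refl R r m s = 1%:M.
Proof.
move=> hc; rewrite /refl.
set E := ebase R r s *m _.
rewrite mulmxBl mul1mx mulmxBr mulmx1 -scalemxAl -scalemxAr scalerA EE //.
rewrite -scalerA. exact: two_lemma.
Qed.

Lemma refl_B (R : realType) r (m : 'I_r -> 'I_r -> nat) s :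
  coxeter_matrix m ->
  (refl R r m s)^T *m cox_form R r m *m refl R r m s = cox_form R r m.
Proof.
move=> hc; rewrite /refl.
set B := cox_form R r m; set e := ebase R r s; set b := row s B.
have Be : B *m e = b^T by rewrite /e /ebase -colE /b tr_row B_sym.
have eB : e^T *m B = b by rewrite /e /ebase trmx_delta -rowE.
have be : b *m e = 1%:M by exact: be1.
have -> : (1%:M - 2%:R *: (e *m b))^T = 1%:M - 2%:R *: (b^T *m e^T).
  by rewrite linearB /= linearZ /= trmx1 trmx_mul.
rewrite mulmxBl mul1mx -scalemxAl -mulmxA eB.
rewrite mulmxBr mulmx1 mulmxBl -!scalemxAr -!scalemxAl mulmxA Be.
rewrite -!mulmxA (mulmxA b) be mul1mx.
exact: two_lemma.
Qed.

Lemma wprod_cons (R : realType) r (m : 'I_r -> 'I_r -> nat) s w :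
  wprod R r m (s :: w) = refl R r m s *m wprod R r m w.
Proof. by []. Qed.

Lemma wprod_cat (R : realType) r (m : 'I_r -> 'I_r -> nat) w1 w2 :
  wprod R r m (w1 ++ w2) = wprod R r m w1 *m wprod R r m w2.
Proof.
elim: w1 => [|s w IH] /=; first by rewrite mul1mx.
by rewrite IH mulmxA.
Qed.

Lemma wprod_inv (R : realType) r (m : 'I_r -> 'I_r -> nat) w :
  coxeter_matrix m -> wprod R r m (rev w) *m wprod R r m w = 1%:M.
Proof.
move=> hc; elim: w => [|s w IH] /=; first by rewrite mul1mx.
rewrite rev_cons -cats1 wprod_cat /= mulmx1 -mulmxA (mulmxA (refl _ _ _ _)).
by rewrite refl_invol // mul1mx.
Qed.

Lemma W_B (R : realType) r (m : 'I_r -> 'I_r -> nat) M :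
  coxeter_matrix m -> in_W R r m M ->
  M^T *m cox_form R r m *m M = cox_form R r m.
Proof.
move=> hc [w <-]; elim: w => [|s w IH] /=; first by rewrite trmx1 mul1mx mulmx1.
rewrite trmx_mul -!mulmxA (mulmxA (refl _ _ _ _)^T) (mulmxA _ _ (wprod _ _ _ _)).
by rewrite refl_B // mulmxA.
Qed.

Lemma bil_expand (R : realType) r (x y : 'cV[R]_r) (A : 'M[R]_r) :
  (x^T *m A *m y) 0 0 = \sum_i \sum_j x i 0 * A i j * y j 0.
Proof.
rewrite mxE exchange_big /=; apply: eq_bigr => j _.
rewrite mxE mulr_suml; apply: eq_bigr => i _.
by rewrite mxE.
Qed.

Lemma sq_expand (R : realType) r (x : 'cV[R]_r) :
  (x^T *m x) 0 0 = \sum_i x i 0 ^+ 2.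
Proof. by rewrite mxE; apply: eq_bigr => i _; rewrite mxE expr2. Qed.

Lemma sq_ge0 (R : realType) r (x : 'cV[R]_r) : 0 <= (x^T *m x) 0 0.
Proof. by rewrite sq_expand; apply: sumr_ge0 => i _; apply: sqr_ge0. Qed.

Lemma sq_gt0 (R : realType) r (x : 'cV[R]_r) : x != 0 -> 0 < (x^T *m x) 0 0.
Proof.
move=> hx; have [i hi] : exists i, x i 0 != 0.
  apply/existsP; apply: contraR hx; rewrite negb_exists => /forallP h.
  apply/eqP/matrixP => i j; rewrite ord1 mxE; exact/eqP/negbNE/h.
rewrite sq_expand (bigD1 i) //=.
apply: (@Order.POrderTheory.lt_le_trans _ _ (x i 0 ^+ 2)); first by rewrite exprn_even_gt0 // hi orbT.
by rewrite lerDl; apply: sumr_ge0 => j _; apply: sqr_ge0.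
Qed.

Lemma in_W_mulr (R : realType) r (m : 'I_r -> 'I_r -> nat) M s :
  in_W R r m M -> in_W R r m (M *m refl R r m s).
Proof.
by case=> w <-; exists (w ++ [:: s]); rewrite wprod_cat /= mulmx1.
Qed.

Lemma W_list (R : realType) r (m : 'I_r -> 'I_r -> nat) :
  coxeter_matrix m -> W_finite R m ->
  exists S : seq 'M[R]_r, [/\ uniq S, forall M, (M \in S) <-> in_W R r m M &
    forall s, perm_eq (map (fun M => M *m refl R r m s) S) S].
Proof.
move=> hc [L hL].
exists [seq M <- undup L | `[< in_W R r m M >]].
have memS : forall M, (M \in [seq M <- undup L | `[< in_W R r m M >]]) <-> in_W R r m M.
  move=> M; rewrite mem_filter mem_undup; split.
    by case/andP => /asboolP.
  move=> hM; apply/andP; split; first exact/asboolP.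
  by case: hM => w <-.
split => //; first by rewrite filter_uniq // undup_uniq.
move=> s; apply: uniq_perm.
- rewrite map_inj_uniq; first by rewrite filter_uniq // undup_uniq.
  move=> M1 M2 /(congr1 (mulmx^~ (refl R r m s))).
  by rewrite -!mulmxA refl_invol // !mulmx1.
- by rewrite filter_uniq // undup_uniq.
move=> X; apply/idP/idP.
  case/mapP => M /memS hM ->; apply/memS; exact: in_W_mulr.
move=> /memS hX; apply/mapP; exists (X *m refl R r m s).
  exact/memS/in_W_mulr.
by rewrite -mulmxA refl_invol // mulmx1.
Qed.

Lemma Q_exists (R : realType) r (m : 'I_r -> 'I_r -> nat) :
  coxeter_matrix m -> W_finite R m ->
  exists Q : 'M[R]_r, [/\ Q^T = Q,
    forall s, (refl R r m s)^T *m Q *m refl R r m s = Q &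
    forall x : 'cV[R]_r, (x^T *m x) 0 0 <= (x^T *m Q *m x) 0 0].
Proof.
move=> hc hW; have [S [uS memS permS]] := @W_list R r m hc hW.
exists (\sum_(M <- S) M^T *m M); split.
- rewrite linear_sum /=.
  by apply: eq_bigr => M _; rewrite trmx_mul trmxK.
- move=> s; rewrite mulmx_sumr mulmx_suml -[in RHS](perm_big _ (permS s)) big_map.
  by apply: eq_bigr => M _; rewrite trmx_mul !mulmxA.
- move=> x; rewrite mulmx_sumr mulmx_suml summxE.
  have h1 : 1%:M \in S by apply/memS; exists [::].
  rewrite (bigD1_seq _ h1 uS) /= trmx1 mulmx1 mulmx1 lerDl.
  apply: sumr_ge0 => M _.
  by rewrite !mulmxA -trmx_mul -mulmxA sq_ge0.
Qed.

Lemma Q_row (R : realType) r (m : 'I_r -> 'I_r -> nat) (Q : 'M[R]_r) s t :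
  coxeter_matrix m -> (refl R r m s)^T *m Q *m refl R r m s = Q ->
  Q s t = Q s s * cox_form R r m s t.
Proof.
move=> hc hQ.
set g := refl R r m s; set e := ebase R r s; set b := row s (cox_form R r m).
have h1 : g^T *m Q = Q *m g.
  by rewrite -{2}hQ -mulmxA refl_invol // mulmx1.
have h2 : e^T *m g^T = - e^T by rewrite -trmx_mul refl_e // linearN.
have h3 : e^T *m Q *m e = (Q s s)%:M.
  rewrite /e /ebase trmx_delta -rowE -colE; apply/matrixP => i j.
  by rewrite !ord1 !mxE.
have h4 : e^T *m Q *m g = e^T *m Q - 2%:R *: ((Q s s) *: b).
  rewrite /g /refl mulmxBr mulmx1 -scalemxAr mulmxA h3 mul_scalar_mx //.
have h5 : - (e^T *m Q) = e^T *m Q - 2%:R *: ((Q s s) *: b).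
  by rewrite -h4 -mulmxA -h1 mulmxA h2 mulNmx.
have h6 : e^T *m Q = Q s s *: b.
  have h : 2%:R *: (e^T *m Q) = 2%:R *: ((Q s s) *: b).
    by rewrite scaler_nat mulr2n -{1}(opprK (e^T *m Q)) h5 opprB subrK.
  by apply: (scalerI _ h); rewrite pnatr_eq0.
have := congr1 (fun A : 'M[R]_(1, r) => A 0 t) h6.
by rewrite /= /e /ebase trmx_delta -rowE !mxE.
Qed.

From mathcomp Require Import ring lra.

Lemma ebase_Q (R : realType) r (Q : 'M[R]_r) i :
  ((ebase R r i)^T *m Q *m ebase R r i) 0 0 = Q i i.
Proof. by rewrite /ebase trmx_delta -rowE -colE !mxE. Qed.

Lemma B_pd (R : realType) r (m : 'I_r -> 'I_r -> nat) :
  coxeter_matrix m -> W_finite R m ->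
  forall x : 'cV[R]_r, x != 0 -> 0 < bil R r m x x.
Proof.
move=> hc hW x hx.
have [Q [Qs Qi Qge]] := @Q_exists R r m hc hW.
set q := fun i => Q i i.
have q1 : forall i, 1 <= q i.
  move=> i; have := Qge (ebase R r i); rewrite ebase_Q.
  by rewrite /ebase trmx_delta mul_delta_mx mxE !eqxx.
have qpos : forall i, 0 < q i by move=> i; exact: (lt_le_trans ltr01 (q1 i)).
have hrow : forall i j, Q i j = q i * cox_form R r m i j.
  by move=> i j; apply: Q_row.
have hsym : forall i j, cox_form R r m i j != 0 -> q i = q j.
  move=> i j hB.
  have e1 : Q j i = Q i j by rewrite -{1}Qs mxE.
  have : (q i - q j) * cox_form R r m i j = 0.
    by rewrite mulrBl -hrow -(B_sym _ _ _ hc) mxE -hrow e1 subrr.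
  by move/eqP; rewrite mulf_eq0 (negbTE hB) orbF subr_eq0 => /eqP.
pose z := \col_i (x i 0 / Num.sqrt (q i)).
have hz : z != 0.
  apply: contra_neq hx => hz0; apply/matrixP => i j; rewrite ord1 mxE.
  have := congr1 (fun A : 'cV[R]_r => A i 0) hz0; rewrite /= !mxE.
  by move/eqP; rewrite mulf_eq0 invr_eq0 sqrtr_eq0 leNgt qpos orbF => /eqP.
have -> : bil R r m x x = (z^T *m Q *m z) 0 0.
  rewrite /bil !bil_expand; apply: eq_bigr => i _; apply: eq_bigr => j _.
  have zE : forall k, z k 0 = x k 0 / Num.sqrt (q k) by move=> k; rewrite mxE.
  rewrite !zE hrow.
  have [hB|hB] := eqVneq (cox_form R r m i j) 0.
    by rewrite hB !(mulr0, mul0r).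
  rewrite -(hsym _ _ hB).
  have sq0 : Num.sqrt (q i) != 0 by rewrite sqrtr_eq0 -ltNge qpos.
  have hq : q i = Num.sqrt (q i) ^+ 2 by rewrite sqr_sqrtr // ltW.
  move: sq0 hq; move: (Num.sqrt (q i)) => sq sq0 ->.
  by field.
apply: (lt_le_trans _ (Qge z)). exact: (@sq_gt0 _ _ _ hz).
Qed.

Lemma B_unit (R : realType) r (m : 'I_r -> 'I_r -> nat) :
  coxeter_matrix m -> W_finite R m -> cox_form R r m \in unitmx.
Proof.
move=> hc hW; rewrite unitmxE unitfE; apply/negP => /det0P [v hv hvB].
have hx : v^T != 0 by apply: contra_neq hv => h; rewrite -(trmxK v) h trmx0.
have := @B_pd R r m hc hW _ hx; rewrite /bil trmxK hvB mul0mx mxE ltxx //.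
Qed.

Lemma bil_sym (R : realType) r (m : 'I_r -> 'I_r -> nat) x y :
  coxeter_matrix m -> bil R r m x y = bil R r m y x.
Proof.
move=> hc; rewrite /bil.
have -> : forall A : 'M[R]_1, A 0 0 = A^T 0 0 by move=> A; rewrite mxE.
by rewrite 2!trmx_mul trmxK (B_sym _ _ _ hc) mulmxA.
Qed.

Lemma bil_ge0 (R : realType) r (m : 'I_r -> 'I_r -> nat) x :
  coxeter_matrix m -> W_finite R m -> 0 <= bil R r m x x.
Proof.
move=> hc hW; have [->|hx] := eqVneq x 0.
  by rewrite /bil mulmx0 mxE.
exact/ltW/B_pd.
Qed.

Lemma bil_DB (R : realType) r (m : 'I_r -> 'I_r -> nat) x y :
  bil R r m (x + y) (x + y) = bil R r m x x + bil R r m x y + bil R r m y x + bil R r m y y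
  /\ bil R r m (x - y) (x - y) = bil R r m x x - bil R r m x y - bil R r m y x + bil R r m y y.
Proof.
have tD : (x + y)^T = x^T + y^T by rewrite linearD.
have tB : (x - y)^T = x^T - y^T by rewrite linearB.
rewrite /bil; split.
  by rewrite tD mulmxDl mulmxDl !mulmxDr !mxE addrA.
rewrite tB mulmxBl mulmxBl !mulmxBr !mxE.
by rewrite opprB addrA [in RHS]addrAC -!addrA; congr (_ + _); rewrite addrC !addrA.
Qed.

Lemma bil_range (R : realType) r (m : 'I_r -> 'I_r -> nat) y z :
  coxeter_matrix m -> W_finite R m ->
  bil R r m y y = 1 -> bil R r m z z = 1 -> -1 <= bil R r m y z <= 1.
Proof.
move=> hc hW hy hz.
have [h1 h2] := bil_DB R r m y z.
have g1 := @bil_ge0 R r m (y + z) hc hW.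
have g2 := @bil_ge0 R r m (y - z) hc hW.
rewrite h1 in g1; rewrite h2 in g2.
rewrite (bil_sym _ _ _ z y hc) hy hz in g1 g2.
apply/andP; split; lra.
Qed.

Lemma acos_eq_pihalf (R : realType) (f : R) :
  -1 <= f <= 1 -> acos f = pi / 2 -> f = 0.
Proof.
move=> hf ha; have := @acosK R f; rewrite in_itv /= hf ha cos_pihalf => h.
by rewrite h.
Qed.

Lemma bil_scale (R : realType) r (m : 'I_r -> 'I_r -> nat) (c : R) x :
  bil R r m (c *: x) (c *: x) = c ^+ 2 * bil R r m x x.
Proof.
have tZ : (c *: x)^T = c *: x^T by rewrite linearZ.
rewrite /bil tZ -scalemxAl -scalemxAl -scalemxAr !mxE.
by rewrite mulrA expr2.
Qed.

Lemma vertex_ex (R : realType) r (m : 'I_r -> 'I_r -> nat) t :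
  coxeter_matrix m -> W_finite R m ->
  exists v lam, [/\ 0 < lam, cox_form R r m *m v = lam *: ebase R r t &
     vertex_of_type m t v].
Proof.
move=> hc hW.
set B := cox_form R r m.
have hB := @B_unit R r m hc hW.
set u0 := invmx B *m ebase R r t.
have Bu : B *m u0 = ebase R r t by rewrite /u0 mulmxA mulmxV // mul1mx.
have u0n : u0 != 0.
  apply/negP => /eqP h; move: Bu; rewrite h mulmx0 => /matrixP /(_ t 0).
  by rewrite !mxE !eqxx /= => /eqP; rewrite eq_sym oner_eq0.
have l0 := @B_pd R r m hc hW u0 u0n.
set l := bil R r m u0 u0 in l0.
have sq0 : 0 < Num.sqrt l by rewrite sqrtr_gt0.
exists ((Num.sqrt l)^-1 *: u0), (Num.sqrt l)^-1; split.
- by rewrite invr_gt0.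
- by rewrite -scalemxAr Bu.
split; first split.
- move=> s; rewrite bil_ebase -scalemxAr Bu !mxE.
  apply: mulr_ge0; first by rewrite invr_ge0 ltW.
  by case: (s == t); rewrite ?ler01 ?lexx.
- rewrite bil_scale -/l exprVn sqr_sqrtr ?ltW // mulVf //.
  by rewrite gt_eqF.
- move=> s hs; rewrite bil_ebase -scalemxAr Bu !mxE (negbTE hs) /=.
  by rewrite mulr0.
Qed.

Definition Pm (R : realType) r (K : pred 'I_r) : 'M[R]_r := diag_mx (\row_u (K u)%:R).

Lemma P_comm (R : realType) r (K : pred 'I_r) (A : 'M[R]_r) :
  (forall u v, K u != K v -> A u v = 0) -> Pm R r K *m A = A *m Pm R r K.
Proof.
move=> hA; apply/matrixP => u v; rewrite /Pm mul_diag_mx mul_mx_diag !mxE.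
have [e|ne] := eqVneq (K u) (K v); first by rewrite e mulrC.
by rewrite hA // mulr0 mul0r.
Qed.

Lemma P_tr (R : realType) r (K : pred 'I_r) : (Pm R r K)^T = Pm R r K.
Proof. by rewrite /Pm tr_diag_mx. Qed.

Lemma closedK (R : realType) r (m : 'I_r -> 'I_r -> nat) s0 :
  coxeter_matrix m -> forall u v, cox_path m s0 u != cox_path m s0 v ->
  cox_form R r m u v = 0.
Proof.
move=> hc u v hne; have [hd hs hge] := hc.
have [huv|huv] := eqVneq u v; first by rewrite huv eqxx in hne.
have hlt : ~~ (3 <= m u v)%N.
  apply/negP => h3; move: hne; rewrite /cox_path.
  have a1 : cox_adj _ m u v by [].
  have a2 : cox_adj _ m v u by rewrite /cox_adj hs.
  have [h|h] := boolP (connect (cox_adj _ m) s0 u).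
    by rewrite (connect_trans h (connect1 a1)) eqxx.
  have [h'|h'] := boolP (connect (cox_adj _ m) s0 v).
    by rewrite (connect_trans h' (connect1 a2)) in h.
  by [].
have h2 : m u v = 2%N.
  by apply/eqP; rewrite eqn_leq hge // andbT; rewrite -ltnS ltnNge.
by rewrite mxE h2 cos_pihalf oppr0.
Qed.

Lemma P_refl (R : realType) r (m : 'I_r -> 'I_r -> nat) (K : pred 'I_r) s :
  (forall u v, K u != K v -> cox_form R r m u v = 0) ->
  Pm R r K *m refl R r m s = refl R r m s *m Pm R r K.
Proof.
move=> hK; apply: P_comm => u v huv.
have uv : u != v by apply: contraNneq huv => ->.
rewrite /refl; move: (cox_form R r m) hK => B hK.
rewrite !mxE big_ord1 !mxE (negbTE uv) /=.
have [us|us] := eqVneq u s.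
  by rewrite -us hK // !mulr0 subr0.
by rewrite /= mul0r mulr0 subr0.
Qed.

Lemma P_W (R : realType) r (m : 'I_r -> 'I_r -> nat) (K : pred 'I_r) w :
  (forall u v, K u != K v -> cox_form R r m u v = 0) ->
  Pm R r K *m wprod R r m w = wprod R r m w *m Pm R r K.
Proof.
move=> hK; elim: w => [|s w IH] /=; first by rewrite mulmx1 mul1mx.
by rewrite mulmxA P_refl // -!mulmxA IH.
Qed.

Lemma P_supp (R : realType) r (m : 'I_r -> 'I_r -> nat) (K : pred 'I_r) x :
  cox_form R r m \in unitmx ->
  (forall u v, K u != K v -> cox_form R r m u v = 0) ->
  supp_in R r m x (fun u => K u) -> Pm R r K *m x = x.
Proof.
move=> hB hK hx.
have h0 : cox_form R r m *m (x - Pm R r K *m x) = 0.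
  have hy : forall u, ~~ K u -> (cox_form R r m *m x) u 0 = 0.
    move=> u ku.
    have : ~~ (bil R r m (ebase R r u) x != 0) by apply: contra ku; exact: hx.
    by rewrite negbK bil_ebase => /eqP.
  rewrite mulmxBr mulmxA -P_comm // -mulmxA /Pm mul_diag_mx.
  move: (cox_form R r m *m x) hy => y hy; apply/matrixP => u j.
  rewrite ord1 !mxE.
  have [ku|ku] := boolP (K u); first by rewrite mul1r subrr.
  by rewrite hy // mul0r subr0.
have : x - Pm R r K *m x = 0.
  by rewrite -(mul1mx (_ - _)) -(mulVmx hB) -mulmxA h0 mulmx0.
by move/eqP; rewrite subr_eq0 eq_sym => /eqP.
Qed.

Lemma P_diag_entry (R : realType) r (K : pred 'I_r) (z : 'cV[R]_r) u :
  (Pm R r K *m z) u 0 = (K u)%:R * z u 0.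
Proof. by rewrite /Pm mul_diag_mx !mxE. Qed.

Lemma e_entry (R : realType) r (z : 'cV[R]_r) (lam : R) u :
  (z^T *m (lam *: ebase R r u)) 0 0 = lam * z u 0.
Proof. by rewrite -scalemxAr /ebase -colE !mxE. Qed.

Lemma cox_path_sym r (m : 'I_r -> 'I_r -> nat) s t :
  coxeter_matrix m -> cox_path m s t = cox_path m t s.
Proof.
case=> _ hs _; apply: sym_connect_sym => a b; by rewrite /cox_adj hs.
Qed.

Theorem mainTheorem7 (R : realType) (r : nat) (m : 'I_r -> 'I_r -> nat)
  (Ch : Type) (delta : Ch -> Ch -> 'M[R]_r) (n : bpoint R r Ch) :
  coxeter_matrix m -> W_finite R m -> is_W_building m delta -> thick m delta ->
  in_chamber m n.2 ->
  forall (c : Ch) (J : {set 'I_r}), J != finset.set0 ->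
    face_in_horizontal m delta n c J <->
    (forall s : 'I_r, (exists2 t, t \in J & cox_path m s t) ->
       forall x : 'cV[R]_r, vertex_of_type m s x -> equatorial m delta n (c, x)).
Proof.
move=> hc hW hbld _ hn c J hJ.
case: hbld => hdW _ _ _.
have hB := @B_unit R r m hc hW.
split.
- move=> hface s [t tJ hst] x [xch xsupp].
  have [v [lam [lpos Bv [vch vsupp]]]] := @vertex_ex R r m t hc hW.
  have hvs : supp_in R r m v (fun u => u \in J).
    move=> u hu; have [->//|ut] := eqVneq u t.
    by rewrite vsupp // eqxx in hu.
  have hbt : bil R r m (ebase R r t) v != 0.
    by rewrite bil_ebase Bv !mxE eqxx mulr1 gt_eqF.
  apply: (hface v vch hvs t hbt c x xch).
  move=> u hu; have [->|us] := eqVneq u s; first by rewrite cox_path_sym.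
  by rewrite xsupp // eqxx in hu.
- move=> hR x xch xsupp s0 hs0.
  have s0J : s0 \in J := xsupp s0 hs0.
  pose K : pred 'I_r := fun u => cox_path m s0 u.
  have hK : forall u v, K u != K v -> cox_form R r m u v = 0.
    by move=> u v; apply: closedK.
  set P := Pm R r K.
  set y := n.2.
  have hy : bil R r m y y = 1 by case: hn.
  have PB : P *m cox_form R r m = cox_form R r m *m P by apply: P_comm.
  have key : forall M, in_W R r m M -> forall v, supp_in R r m v (fun u => K u) ->
      bil R r m y (M *m v) = (((P *m y)^T *m cox_form R r m) *m M *m v) 0 0.
    move=> M [w <-] v hv.
    rewrite /bil -(@P_supp R r m K v hB hK hv) (mulmxA (wprod _ _ _ _)) -P_W //.
    rewrite trmx_mul P_tr -/P !mulmxA -(mulmxA y^T P) PB mulmxA.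
    by rewrite -(mulmxA _ P v) (@P_supp R r m K v hB hK hv).
  have Py0 : P *m y = 0.
    have [w hw] := hdW n.1 c.
    set M := delta n.1 c in hw *.
    set M' := wprod R r m (rev w).
    have M'M : M' *m M = 1%:M by rewrite -hw wprod_inv.
    have MM' : M *m M' = 1%:M by apply: mulmx1C.
    set z := M' *m (P *m y).
    have Mz : M *m z = P *m y by rewrite /z mulmxA MM' mul1mx.
    suff hz : z = 0 by rewrite -Mz hz mulmx0.
    apply/matrixP => u j; rewrite ord1 [RHS]mxE.
    have [ku|ku] := boolP (K u); last first.
      by rewrite /z mulmxA -P_W // -mulmxA P_diag_entry (negbTE ku) mul0r.
    have [v [lam [lpos Bv [vch vsupp]]]] := @vertex_ex R r m u hc hW.
    have hvs : supp_in R r m v (fun u => K u).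
      move=> u' hu'; have [->//|ut] := eqVneq u' u.
      by rewrite vsupp // eqxx in hu'.
    have hus : cox_path m u s0 by rewrite (cox_path_sym _ _ _ _ hc); exact: ku.
    have heq := hR u (ex_intro2 _ _ s0 s0J hus) v (conj vch vsupp).
    have MW : in_W R r m M by exists w.
    have hrange : -1 <= bil R r m y (M *m v) <= 1.
      apply: (@bil_range R r m y (M *m v) hc hW hy).
      rewrite /bil trmx_mul !mulmxA -(mulmxA v^T M^T) -(mulmxA v^T) (@W_B R r m M hc MW).
      by case: vch => _ <-.
    have h0 : bil R r m y (M *m v) = 0 := @acos_eq_pihalf R _ hrange heq.
    rewrite (key M MW v hvs) -Mz trmx_mul -(mulmxA z^T M^T) -(mulmxA z^T)
      (@W_B R r m M hc MW) -mulmxA Bv e_entry in h0.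
    by move/eqP: h0; rewrite mulf_eq0 (gt_eqF lpos) /= => /eqP.
  move=> c' x' _ hx'; rewrite /equatorial /ang_dist /=.
  have -> : bil R r m n.2 (delta n.1 c' *m x') = 0.
    by rewrite -/y (key _ (hdW _ _) x' hx') Py0 trmx0 !mul0mx mxE.
  exact: acos0.
Qed.
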